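(* For $T$ large enough let $Q_T$ denote the unique $T$-periodic solution of the pendulum equation $\ddot q=\sin q$ with small positive energy satisfying $Q_T(0)=-\pi$, $Q_T(T)=\pi$. There exists $T_0>0$ such that for every $T\ge T_0$ and every continuous $f:[-1,T+1]\to\mathbf R$ there exists a unique solution $h$ of $$-\ddot h+\cos(Q_T(t))\,h=f,\qquad h(0)=h(T)=0,$$ on $[-1,T+1]$, and the Green operator $\mathcal G:C^0([-1,T+1])\to C^2([-1,T+1])$, $\mathcal G(f)=h$, satisfies $$\max_{t\in[-1,T+1]}\big(|h(t)|+|\dot h(t)|\big)\le C\max_{t\in[-1,T+1]}|f(t)|$$ for a constant $C>0$ independent of $T$. *)

(* Defs.v *)
From Stdlib Require Import Reals.
From Coquelicot Require Import Coquelicot.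
Open Scope R_scope.

Definition in_Icc (a b t : R) : Prop := a <= t <= b.

Definition continuous_on_Icc (a b : R) (f : R -> R) : Prop :=
  forall t, in_Icc a b t ->
    filterlim f (within (in_Icc a b) (locally t)) (locally (f t)).

Definition derive_on_Icc (a b : R) (f f' : R -> R) : Prop :=
  forall t, in_Icc a b t ->
    filterlim (fun s => (f s - f t) / (s - t))
      (within (fun s => in_Icc a b s /\ s <> t) (locally t)) (locally (f' t)).

(* Energy of the pendulum q'' = sin q, normalised so that the separatrix
   through the hyperbolic equilibrium q = 0 has energy 0. *)
Definition pend_energy (q v : R) : R := v ^ 2 / 2 + cos q - 1.

(* Q (with velocity Q') is the T-periodic (mod 2 pi) solution of the pendulum
   equation with positive energy and Q(0) = -pi, Q(T) = pi. *)
Definition is_Q_T (T : R) (Q Q' : R -> R) : Prop :=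
  (forall t, is_derive Q t (Q' t)) /\
  (forall t, is_derive Q' t (sin (Q t))) /\
  0 < pend_energy (Q 0) (Q' 0) /\
  (forall t, Q (t + T) = Q t + 2 * PI) /\
  Q 0 = - PI /\ Q T = PI.

Definition green_sol (T : R) (Q f h h' h'' : R -> R) : Prop :=
  derive_on_Icc (-1) (T + 1) h h' /\
  derive_on_Icc (-1) (T + 1) h' h'' /\
  continuous_on_Icc (-1) (T + 1) h'' /\
  (forall t, in_Icc (-1) (T + 1) t -> - h'' t + cos (Q t) * h t = f t) /\
  h 0 = 0 /\ h T = 0.

(* Main.v *)
From Stdlib Require Import Reals Lra Psatz.
From Coquelicot Require Import Coquelicot.
Require Import Defs.
Open Scope R_scope.

Lemma der_pr (F F' : R -> R) : (forall t, is_derive F t (F' t)) -> derivable F.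
Proof. intros H t. exists (F' t). apply is_derive_Reals. apply H. Defined.

Lemma mvt (F F' : R -> R) x y : x < y -> (forall t, is_derive F t (F' t)) ->
  exists c, x < c < y /\ F y - F x = F' c * (y - x).
Proof.
  intros Hxy H. destruct (MVT_cor1 F x y (der_pr F F' H) Hxy) as [c [Hc1 Hc2]].
  exists c. split; [exact Hc2|]. rewrite Hc1. reflexivity.
Qed.

Lemma mvt_bound (F F' : R -> R) x y B : x <= y -> (forall t, is_derive F t (F' t)) ->
  (forall t, x <= t <= y -> Rabs (F' t) <= B) -> Rabs (F y - F x) <= B * (y - x).
Proof.
  intros Hxy H HB. destruct (Rle_lt_or_eq_dec _ _ Hxy) as [Hlt|Heq].
  - destruct (mvt F F' x y Hlt H) as [c [Hc E]]. rewrite E, Rabs_mult.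
    rewrite (Rabs_right (y - x)) by lra. apply Rmult_le_compat_r; [lra|]. apply HB; lra.
  - subst. replace (F y - F y) with 0 by ring. rewrite Rabs_R0.
    assert (0 <= B). { eapply Rle_trans; [apply Rabs_pos| apply (HB y); lra]. } nra.
Qed.

Lemma deriv_const (F : R -> R) : (forall t, is_derive F t 0) -> forall x y, F x = F y.
Proof.
  intros H x y. destruct (Rtotal_order x y) as [h|[h|h]].
  - destruct (mvt F (fun _ => 0) x y h H) as [c [_ E]]. lra.
  - subst; auto.
  - destruct (mvt F (fun _ => 0) y x h H) as [c [_ E]]. lra.
Qed.

Lemma is_derive_val (F : R -> R) x a b : is_derive F x a -> a = b -> is_derive F x b.
Proof. intros H <-; exact H. Qed.

Lemma der_cont (F F' : R -> R) t : is_derive F t (F' t) -> continuity_pt F t.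
Proof. intros H. apply continuity_pt_filterlim. apply (ex_derive_continuous (V:=R_NormedModule) F). eexists; exact H. Qed.
Lemma ballR (x e y : R) : ball x e y <-> Rabs (y - x) < e.
Proof. reflexivity. Qed.

Definition clamp a b t := Rmax a (Rmin b t).
Lemma clamp_in a b t : a <= b -> in_Icc a b (clamp a b t).
Proof. intros. unfold clamp, in_Icc, Rmax, Rmin. repeat destruct Rle_dec; lra. Qed.
Lemma clamp_id a b t : in_Icc a b t -> clamp a b t = t.
Proof. unfold clamp, in_Icc, Rmax, Rmin. intros. repeat destruct Rle_dec; lra. Qed.
Lemma clamp_lip a b s t : a <= b -> Rabs (clamp a b s - clamp a b t) <= Rabs (s - t).
Proof. intros. unfold clamp, Rmax, Rmin. repeat destruct Rle_dec; unfold Rabs; repeat destruct Rcase_abs; lra. Qed.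

Lemma cont_ext a b f : a <= b -> continuous_on_Icc a b f ->
  forall t, continuous (fun s => f (clamp a b s)) t.
Proof.
  intros Hab Hf t. unfold continuous.
  eapply filterlim_comp with (G := within (in_Icc a b) (locally (clamp a b t))).
  - intros P [eps HP]. exists eps. intros y Hy. apply HP; [|apply clamp_in; auto].
    apply ballR. apply ballR in Hy. eapply Rle_lt_trans; [apply clamp_lip; auto| exact Hy].
  - apply Hf. apply clamp_in; auto.
Qed.

Lemma derive_on_of (a b : R) (F F' : R -> R) : (forall t, is_derive F t (F' t)) -> derive_on_Icc a b F F'.
Proof.
  intros H t _. intros P [eps HP].
  destruct (proj1 (is_derive_Reals F t (F' t)) (H t) eps (cond_pos eps)) as [d Hd].
  exists d. intros s Hs [_ Hst]. apply HP. apply ballR. apply ballR in Hs.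
  specialize (Hd (s - t)). assert (Es : t + (s - t) = s) by ring. rewrite Es in Hd. assert (Hs2 : Rabs (s - t) < d) by exact Hs. apply Hd; auto. lra.
Qed.

Lemma cont_on_of (a b : R) (F : R -> R) : (forall t, continuous F t) -> continuous_on_Icc a b F.
Proof.
  intros H t _. eapply filterlim_filter_le_1; [|apply H].
  intros P HP. unfold within. destruct HP as [e He]. exists e. intros y Hy _. apply He; auto.
Qed.

Lemma derive_interior (a b : R) (F F' : R -> R) t : a < t < b -> derive_on_Icc a b F F' -> is_derive F t (F' t).
Proof.
  intros Ht H. apply is_derive_Reals. intros eps Heps.
  assert (Hl := H t ltac:(unfold in_Icc; lra)).
  destruct (Hl (ball (F' t) (mkposreal eps Heps)) (locally_ball _ _)) as [d Hd].
  assert (Hm : 0 < Rmin d (Rmin (t - a) (b - t))) by (apply Rmin_pos; [apply cond_pos| apply Rmin_pos; lra]).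
  exists (mkposreal _ Hm). intros h Hh0 Hh. simpl in Hh.
  assert (Hh1 := Rmin_l d (Rmin (t - a) (b - t))). assert (Hh2 := Rmin_r d (Rmin (t - a) (b - t))).
  assert (Hh3 := Rmin_l (t - a) (b - t)). assert (Hh4 := Rmin_r (t - a) (b - t)).
  assert (Hb : ball t d (t + h)). { apply ballR. replace (t + h - t) with h by ring. lra. }
  specialize (Hd (t + h) Hb). replace (t + h - t) with h in Hd by ring. apply Hd.
  unfold in_Icc. split; [|lra]. revert Hh; unfold Rabs; destruct Rcase_abs; lra.
Qed.

Lemma endpoint_eq (D : R -> Prop) t (u v : R -> R) lu lv :
  filterlim (fun s => (u s - u t) / (s - t)) (within D (locally t)) (locally lu) ->
  filterlim (fun s => (v s - v t) / (s - t)) (within D (locally t)) (locally lv) ->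
  (forall d, 0 < d -> exists s, D s /\ s <> t /\ Rabs (s - t) < d /\ u s = v s) ->
  u t = v t.
Proof.
  intros Hu Hv Hs.
  destruct (Hu (ball lu (mkposreal 1 Rlt_0_1)) (locally_ball _ _)) as [d1 Hd1].
  destruct (Hv (ball lv (mkposreal 1 Rlt_0_1)) (locally_ball _ _)) as [d2 Hd2].
  destruct (Req_dec (u t) (v t)) as [E|NE]; [exact E|exfalso].
  set (e := Rabs (u t - v t)). assert (He : 0 < e) by (apply Rabs_pos_lt; lra).
  set (K := Rabs lu + Rabs lv + 2).
  assert (HK : 0 < K) by (unfold K; pose proof (Rabs_pos lu); pose proof (Rabs_pos lv); lra).
  assert (Hm : 0 < Rmin (Rmin d1 d2) (e / K)).
  { apply Rmin_pos; [apply Rmin_pos; apply cond_pos| apply Rdiv_lt_0_compat; lra]. }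
  destruct (Hs _ Hm) as [s [HD [Hne [Hst Huv]]]].
  assert (m1 := Rmin_l (Rmin d1 d2) (e / K)). assert (m2 := Rmin_r (Rmin d1 d2) (e / K)).
  assert (m3 := Rmin_l d1 d2). assert (m4 := Rmin_r d1 d2).
  assert (B1 : Rabs ((u s - u t) / (s - t) - lu) < 1).
  { apply (Hd1 s); [apply ballR; lra| exact HD]. }
  assert (B2 : Rabs ((v s - v t) / (s - t) - lv) < 1).
  { apply (Hd2 s); [apply ballR; lra| exact HD]. }
  assert (Hst0 : s - t <> 0) by lra.
  assert (Eq : (u s - u t) / (s - t) - (v s - v t) / (s - t) = (v t - u t) / (s - t)).
  { rewrite Huv. field. auto. }
  assert (B3 : Rabs ((v t - u t) / (s - t)) <= K).
  { rewrite <- Eq. unfold K.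
    replace ((u s - u t) / (s - t) - (v s - v t) / (s - t)) with
      (((u s - u t) / (s - t) - lu) - ((v s - v t) / (s - t) - lv) + (lu - lv)) by ring.
    assert (T1 : Rabs (lu - lv) <= Rabs lu + Rabs lv).
    { unfold Rminus. rewrite <- (Rabs_Ropp lv). apply Rabs_triang. }
    assert (T2 : forall x y, Rabs (x - y) <= Rabs x + Rabs y).
    { intros x y. unfold Rminus. rewrite <- (Rabs_Ropp y). apply Rabs_triang. }
    assert (T3 := Rabs_triang (((u s - u t) / (s - t) - lu) - ((v s - v t) / (s - t) - lv)) (lu - lv)).
    assert (T4 := T2 ((u s - u t) / (s - t) - lu) ((v s - v t) / (s - t) - lv)).
    lra. }
  rewrite Rabs_div in B3 by auto. rewrite <- Rabs_Ropp in B3.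
  replace (- (v t - u t)) with (u t - v t) in B3 by ring. fold e in B3.
  assert (Hp : 0 < Rabs (s - t)) by (apply Rabs_pos_lt; auto).
  apply (Rmult_le_compat_r (Rabs (s - t))) in B3; [|lra].
  unfold Rdiv in B3. rewrite Rmult_assoc, Rinv_l in B3 by lra.
  assert (Rabs (s - t) < e / K) by lra.
  apply (Rmult_lt_compat_l K) in H; [|lra]. unfold Rdiv in H.
  rewrite <- Rmult_assoc, (Rmult_comm K e), Rmult_assoc, Rinv_r in H by lra. nra.
Qed.
Lemma Lw_poly (C S E p cq sq : R) : cq = 2*C*C - 1 -> sq = 2*S*C -> S*S + C*C = 1 ->
  p * p = 2*E + 2 - 2*cq ->
  - (-(C*(p/2)*p + S*sq) + (cq*p*p + sq*sq)/2) + cq * (1/2 + 2*C - cq/2)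
  = E*(1+C-2*C*C) + (1 + 2*C - 5*C*C + 4*C*C*C*C).
Proof.
  intros Hc Hs HSC Hp. subst cq sq.
  replace (C*(p/2)*p) with (C*(p*p)/2) by field.
  replace ((2 * C * C - 1) * p * p) with ((2 * C * C - 1) * (p * p)) by ring.
  rewrite Hp.
  replace (S * (2 * S * C)) with (2*C*(S*S)) by ring.
  replace ((2 * S * C) * (2 * S * C)) with (4*C*C*(S*S)) by ring.
  replace (S*S) with (1 - C*C) by lra. field.
Qed.

Lemma poly_pos C : 0 <= C <= 1 -> 1/4 <= 1 + 2*C - 5*C*C + 4*C*C*C*C.
Proof.
  intros H. destruct (Rle_lt_dec C (1/2)).
  - nra.
  - assert (1 + 2*C - 5*C*C + 4*C*C*C*C = (2*C*C-1)*(2*C*C-1) - (C-1)*(C-1) + 1) by field. nra.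
Qed.

Lemma Dv (F F' : R -> R) (H : forall t, is_derive F t (F' t)) t : Derive (fun x => F x) t = F' t.
Proof. apply is_derive_unique. apply H. Qed.
Lemma Ex (F F' : R -> R) (H : forall t, is_derive F t (F' t)) t : ex_derive (fun x => F x) t.
Proof. eexists. apply H. Qed.
Ltac solve_ex := match goal with H : forall t, is_derive ?F t _ |- ex_derive (fun x => ?F x) ?t => exact (Ex _ _ H t) end.
Ltac rw_D := repeat match goal with H : forall t, is_derive ?F t _ |- context [Derive (fun x => ?F x) ?t] => rewrite (Dv _ _ H t) end.
Ltac ad := eapply is_derive_val; [auto_derive; [repeat split; try solve_ex | reflexivity] | rw_D;
  match goal with |- ?a = ?b => change (@eq R a b) end; change RinvImpl.Rinv with Rinv; unfold Rdiv, Rminus].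

Definition wf (Q : R -> R) t := 1/2 + 2*cos(Q t/2) - cos(Q t)/2.
Definition w1f (Q p : R -> R) t := -(sin(Q t/2)*p t) + sin(Q t)*p t/2.
Definition w2f (Q p : R -> R) t := -(cos(Q t/2)*(p t/2)*p t + sin(Q t/2)*sin(Q t)) + (cos(Q t)*p t*p t + sin(Q t)*sin(Q t))/2.

Lemma w_der (Q p : R -> R) : (forall t, is_derive Q t (p t)) -> (forall t, is_derive p t (sin (Q t))) ->
  (forall t, is_derive (wf Q) t (w1f Q p t)) /\ (forall t, is_derive (w1f Q p) t (w2f Q p t)).
Proof.
  intros HQ Hp. split; intros t; unfold wf, w1f, w2f; ad; field.
Qed.

Lemma w_props (Q p : R -> R) E t : -PI <= Q t <= PI -> p t * p t = 2*E + 2 - 2*cos (Q t) -> 0 < E ->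
  (1 <= wf Q t <= 2) /\ 1/4 <= - w2f Q p t + cos (Q t) * wf Q t.
Proof.
  intros HQ Hpp HE. unfold wf, w2f.
  set (x := Q t / 2). assert (Hx : Q t = 2 * x) by (unfold x; field).
  assert (Hc : cos (Q t) = 2 * cos x * cos x - 1) by (rewrite Hx; apply cos_2a_cos).
  assert (Hs : sin (Q t) = 2 * sin x * cos x) by (rewrite Hx; apply sin_2a).
  assert (HSC : sin x * sin x + cos x * cos x = 1) by (pose proof (sin2_cos2 x); unfold Rsqr in H; lra).
  assert (HC0 : 0 <= cos x) by (apply cos_ge_0; unfold x; lra).
  assert (HC1 : cos x <= 1) by apply COS_bound.
  split.
  - rewrite Hc. nra.
  - rewrite (Lw_poly (cos x) (sin x) E (p t) (cos (Q t)) (sin (Q t))); auto.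
    pose proof (poly_pos (cos x) (conj HC0 HC1)).
    assert (0 <= E * (1 + cos x - 2 * cos x * cos x)).
    { apply Rmult_le_pos; [lra|nra]. }
    lra.
Qed.

Lemma local_min_contra (F F1 : R -> R) t0 r2 : (forall t, is_derive F t (F1 t)) ->
  is_derive F1 t0 r2 -> F1 t0 = 0 -> 0 < r2 ->
  forall d, 0 < d -> exists t, t0 < t < t0 + d /\ F t0 < F t.
Proof.
  intros HF H1 E0 Hr d Hd.
  destruct (proj1 (is_derive_Reals F1 t0 r2) H1 r2 Hr) as [d1 Hd1].
  set (h := Rmin d d1 / 2).
  assert (Hh : 0 < h) by (unfold h; apply Rdiv_lt_0_compat; [apply Rmin_pos; [lra|apply cond_pos]|lra]).
  assert (m1 := Rmin_l d d1). assert (m2 := Rmin_r d d1).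
  exists (t0 + h). split; [unfold h in *; lra|].
  destruct (mvt F F1 t0 (t0 + h) ltac:(lra) HF) as [c [Hc Eq]].
  assert (Hpos : 0 < F1 c).
  { specialize (Hd1 (c - t0) ltac:(lra)).
    replace (t0 + (c - t0)) with c in Hd1 by ring. rewrite E0 in Hd1.
    assert (Hcr : Rabs (c - t0) < d1) by (rewrite Rabs_right by lra; unfold h in *; lra).
    specialize (Hd1 Hcr).
    apply Rabs_def2 in Hd1. destruct Hd1 as [_ Hd1].
    assert (0 < (F1 c - 0) / (c - t0)) by lra.
    unfold Rdiv in H. replace (F1 c - 0) with (F1 c) in H by ring.
    assert (0 < / (c - t0)) by (apply Rinv_0_lt_compat; lra).
    destruct (Rle_lt_dec (F1 c) 0); [|lra]. exfalso.
    assert (F1 c * / (c - t0) <= 0) by (apply Rmult_le_0_r; lra). lra. }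
  assert (0 < F1 c * (t0 + h - t0)) by (apply Rmult_lt_0_compat; lra). lra.
Qed.

Lemma max_principle (T E : R) (Q p v v1 v2 : R -> R) : 0 < T -> 0 < E ->
  (forall t, is_derive Q t (p t)) -> (forall t, is_derive p t (sin (Q t))) ->
  (forall t, p t * p t = 2*E + 2 - 2*cos (Q t)) ->
  (forall t, 0 <= t <= T -> -PI <= Q t <= PI) ->
  (forall t, is_derive v t (v1 t)) -> (forall t, is_derive v1 t (v2 t)) ->
  v 0 <= 0 -> v T <= 0 -> (forall t, 0 <= t <= T -> - v2 t + cos (Q t) * v t <= 0) ->
  forall t, 0 <= t <= T -> v t <= 0.
Proof.
  intros HT HE HQ Hp Hpp HQr Hv Hv1 Hv0 HvT HL.
  destruct (w_der Q p HQ Hp) as [Hw Hw1].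
  set (w := wf Q) in *. set (w1 := w1f Q p) in *. set (w2 := w2f Q p) in *.
  assert (WP : forall t, 0 <= t <= T -> (1 <= w t <= 2) /\ 1/4 <= - w2 t + cos (Q t) * w t).
  { intros t Ht. apply (w_props Q p E t); auto. }
  set (z := fun t => v t / w t).
  assert (Hz : forall c, 0 <= c <= T -> continuity_pt z c).
  { intros c Hc. apply continuity_pt_div.
    - apply (der_cont v v1). apply Hv.
    - apply (der_cont w w1). apply Hw.
    - destruct (WP c Hc) as [[? ?] ?]. lra. }
  destruct (continuity_ab_maj z 0 T ltac:(lra) Hz) as [t0 [Hmax Ht0]].
  assert (Hzw : forall t, 0 <= t <= T -> v t = z t * w t).
  { intros t Ht. unfold z. field. destruct (WP t Ht) as [[? ?] ?]. lra. }
  destruct (Rle_lt_dec (z t0) 0) as [Hz0|Hz0].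
  { intros t Ht. rewrite (Hzw t Ht). destruct (WP t Ht) as [[? ?] ?].
    specialize (Hmax t Ht). nra. }
  exfalso.
  destruct (WP t0 Ht0) as [[Wt0a Wt0b] Lt0].
  assert (Hvt0 : 0 < v t0) by (rewrite (Hzw t0 Ht0); nra).
  assert (Ht0a : 0 < t0).
  { destruct (Req_dec t0 0) as [e|]; [|lra]. subst t0. lra. }
  assert (Ht0b : t0 < T).
  { destruct (Req_dec t0 T) as [e|]; [|lra]. subst t0. lra. }
  set (Rf := fun t => v t * w t0 - v t0 * w t).
  set (R1 := fun t => v1 t * w t0 - v t0 * w1 t).
  set (R2 := fun t => v2 t * w t0 - v t0 * w2 t).
  assert (HR : forall t, is_derive Rf t (R1 t)).
  { intros t. unfold Rf, R1. ad. ring. }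
  assert (HR1 : forall t, is_derive R1 t (R2 t)).
  { intros t. unfold R2, R1. ad. ring. }
  assert (Rle : forall t, 0 <= t <= T -> Rf t <= 0).
  { intros t Ht. unfold Rf. rewrite (Hzw t Ht), (Hzw t0 Ht0).
    destruct (WP t Ht) as [[? ?] ?]. specialize (Hmax t Ht).
    replace (z t * w t * w t0 - z t0 * w t0 * w t) with ((z t - z t0) * (w t * w t0)) by ring.
    apply Rmult_le_0_r; [lra| nra]. }
  assert (HR0 : Rf t0 = 0) by (unfold Rf; ring).
  assert (HR1t0 : R1 t0 = 0).
  { set (pr := exist (fun l => derivable_pt_lim Rf t0 l) (R1 t0) (proj1 (is_derive_Reals _ _ _) (HR t0))).
    assert (D := deriv_maximum Rf 0 T t0 pr Ht0a Ht0b).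
    simpl in D. apply D. intros x Hx1 Hx2. rewrite HR0. apply Rle; lra. }
  assert (HR2 : 0 < R2 t0).
  { unfold R2. specialize (HL t0 Ht0). nra. }
  destruct (local_min_contra Rf R1 t0 (R2 t0) HR (HR1 t0) HR1t0 HR2 (T - t0) ltac:(lra)) as [t [Ht Hgt]].
  rewrite HR0 in Hgt. assert (Rf t <= 0) by (apply Rle; lra). lra.
Qed.

Lemma gr_poly x y z M : 0 <= M -> Rabs z <= Rabs x + M -> 2*x*y + 2*y*z <= 3*(x*x + y*y + M*M).
Proof.
  intros HM Hz.
  assert (H1 : y * z <= Rabs y * Rabs z) by (rewrite <- Rabs_mult; apply Rle_abs).
  assert (Hy : Rabs y * Rabs y = y * y) by (rewrite <- Rabs_mult; apply Rabs_right; nra).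
  assert (Hx : Rabs x * Rabs x = x * x) by (rewrite <- Rabs_mult; apply Rabs_right; nra).
  pose proof (Rabs_pos y). pose proof (Rabs_pos x).
  assert (Rabs y * Rabs z <= Rabs y * (Rabs x + M)) by (apply Rmult_le_compat_l; lra).
  assert (0 <= (x - y) * (x - y)) by (pose proof (Rle_0_sqr (x - y)) as Q0; unfold Rsqr in Q0; exact Q0).
  assert (0 <= (Rabs x - Rabs y) * (Rabs x - Rabs y)) by (pose proof (Rle_0_sqr (Rabs x - Rabs y)) as Q0; unfold Rsqr in Q0; exact Q0).
  assert (0 <= (Rabs y - M) * (Rabs y - M)) by (pose proof (Rle_0_sqr (Rabs y - M)) as Q0; unfold Rsqr in Q0; exact Q0).
  nra.
Qed.

Lemma exp3 s : s <= 3 -> exp s <= 27.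
Proof.
  intros Hs. assert (exp s <= exp 3).
  { destruct (Rle_lt_or_eq_dec _ _ Hs). left; apply exp_increasing; auto. subst; lra. }
  replace 3 with (1 + 1 + 1) in H by ring. rewrite !exp_plus in H.
  pose proof exp_le_3. pose proof (exp_pos 1). nra.
Qed.

Lemma gron_fwd (h h1 h2 : R -> R) a B M : 0 <= M ->
  (forall t, is_derive h t (h1 t)) -> (forall t, is_derive h1 t (h2 t)) ->
  (forall t, a <= t <= a + 1 -> Rabs (h2 t) <= Rabs (h t) + M) ->
  h a * h a + h1 a * h1 a <= B ->
  forall t, a <= t <= a + 1 -> h t * h t + h1 t * h1 t <= 27 * (B + M * M).
Proof.
  intros HM Hh Hh1 H2 HB t Ht.
  set (G := fun t => (h t * h t + h1 t * h1 t + M * M) * exp (-3 * (t - a))).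
  set (G' := fun t => (2 * h t * h1 t + 2 * h1 t * h2 t - 3 * (h t * h t + h1 t * h1 t + M * M)) * exp (-3 * (t - a))).
  assert (HG : forall t, is_derive G t (G' t)). { intros s. unfold G, G'. ad. field. }
  assert (Gle : G t <= G a).
  { destruct (Rle_lt_or_eq_dec _ _ (proj1 Ht)) as [Hlt|Heq]; [|subst; lra].
    destruct (mvt G G' a t Hlt HG) as [c [Hc Eq]].
    assert (G' c <= 0).
    { unfold G'. apply Rmult_le_0_r; [|left; apply exp_pos].
      pose proof (gr_poly (h c) (h1 c) (h2 c) M HM (H2 c ltac:(lra))). lra. }
    assert (G' c * (t - a) <= 0) by (apply Rmult_le_0_r; lra). lra. }
  unfold G in Gle. replace (a - a) with 0 in Gle by ring. rewrite Rmult_0_r, exp_0, Rmult_1_r in Gle.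
  assert (E : h t * h t + h1 t * h1 t + M * M = (h t * h t + h1 t * h1 t + M * M) * exp (-3 * (t - a)) * exp (3 * (t - a))).
  { rewrite Rmult_assoc, <- exp_plus. replace (-3 * (t - a) + 3 * (t - a)) with 0 by ring. rewrite exp_0. ring. }
  assert (X : exp (3 * (t - a)) <= 27) by (apply exp3; lra).
  pose proof (exp_pos (3 * (t - a))).
  assert (0 <= (h t * h t + h1 t * h1 t + M * M) * exp (-3 * (t - a))).
  { apply Rmult_le_pos; [nra| left; apply exp_pos]. }
  assert ((h t * h t + h1 t * h1 t + M * M) * exp (-3 * (t - a)) * exp (3 * (t - a)) <= (B + M * M) * 27).
  { apply Rmult_le_compat; lra. }
  nra.
Qed.

Lemma gron_bwd (h h1 h2 : R -> R) a B M : 0 <= M ->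
  (forall t, is_derive h t (h1 t)) -> (forall t, is_derive h1 t (h2 t)) ->
  (forall t, a - 1 <= t <= a -> Rabs (h2 t) <= Rabs (h t) + M) ->
  h a * h a + h1 a * h1 a <= B ->
  forall t, a - 1 <= t <= a -> h t * h t + h1 t * h1 t <= 27 * (B + M * M).
Proof.
  intros HM Hh Hh1 H2 HB t Ht.
  set (G := fun t => (h t * h t + h1 t * h1 t + M * M) * exp (3 * (t - a))).
  set (G' := fun t => (2 * h t * h1 t + 2 * h1 t * h2 t + 3 * (h t * h t + h1 t * h1 t + M * M)) * exp (3 * (t - a))).
  assert (HG : forall t, is_derive G t (G' t)). { intros s. unfold G, G'. ad. field. }
  assert (Gle : G t <= G a).
  { destruct (Rle_lt_or_eq_dec _ _ (proj2 Ht)) as [Hlt|Heq]; [|subst; lra].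
    destruct (mvt G G' t a Hlt HG) as [c [Hc Eq]].
    assert (0 <= G' c).
    { unfold G'. apply Rmult_le_pos; [|left; apply exp_pos].
      pose proof (gr_poly (h c) (- h1 c) (h2 c) M HM (H2 c ltac:(lra))). lra. }
    assert (0 <= G' c * (a - t)) by (apply Rmult_le_pos; lra). lra. }
  unfold G in Gle. replace (a - a) with 0 in Gle by ring. rewrite Rmult_0_r, exp_0, Rmult_1_r in Gle.
  assert (E : h t * h t + h1 t * h1 t + M * M = (h t * h t + h1 t * h1 t + M * M) * exp (3 * (t - a)) * exp (-3 * (t - a))).
  { rewrite Rmult_assoc, <- exp_plus. replace (3 * (t - a) + -3 * (t - a)) with 0 by ring. rewrite exp_0. ring. }
  assert (X : exp (-3 * (t - a)) <= 27) by (apply exp3; lra).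
  pose proof (exp_pos (-3 * (t - a))).
  assert (0 <= (h t * h t + h1 t * h1 t + M * M) * exp (3 * (t - a))).
  { apply Rmult_le_pos; [nra| left; apply exp_pos]. }
  assert ((h t * h t + h1 t * h1 t + M * M) * exp (3 * (t - a)) * exp (-3 * (t - a)) <= (B + M * M) * 27).
  { apply Rmult_le_compat; lra. }
  nra.
Qed.

Lemma Dv1 (F : R -> R) t l : is_derive F t l -> Derive (fun x => F x) t = l.
Proof. intros H. apply is_derive_unique. apply H. Qed.
Ltac solve_ex1 := match goal with
  | H : forall t, is_derive ?F t _ |- ex_derive (fun x => ?F x) ?t => exact (Ex _ _ H t)
  | H : is_derive ?F ?t _ |- ex_derive (fun x => ?F x) ?t => eexists; exact H end.
Ltac rw_D1 := repeat match goal with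
  | H : forall t, is_derive ?F t _ |- context [Derive (fun x => ?F x) ?t] => rewrite (Dv _ _ H t)
  | H : is_derive ?F ?t _ |- context [Derive (fun x => ?F x) ?t] => rewrite (Dv1 _ _ _ H) end.
Ltac ad1 := eapply is_derive_val; [auto_derive; [repeat split; try solve_ex1; try solve [auto] | reflexivity] | rw_D1;
  match goal with |- ?a = ?b => change (@eq R a b) end; change RinvImpl.Rinv with Rinv; unfold Rdiv, Rminus].

Lemma ftc0 (F : R -> R) : (forall x, continuous F x) -> forall t, is_derive (fun t => RInt F 0 t) t (F t).
Proof.
  intros H t. apply (is_derive_RInt F (fun t => RInt F 0 t) 0 t).
  - exists (mkposreal 1 Rlt_0_1). intros y _. apply (RInt_correct F 0 y).
    apply ex_RInt_continuous. intros; apply H.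
  - apply H.
Qed.

Lemma cont_of (F : R -> R) x : continuity_pt F x -> continuous F x.
Proof. intros H. apply continuity_pt_filterlim. exact H. Qed.

Lemma const_open a b (F : R -> R) : (forall t, a < t < b -> is_derive F t 0) ->
  forall x y, a < x < b -> a < y < b -> F x = F y.
Proof.
  intros H x y Hx Hy.
  destruct (MVT_gen F x y (fun _ => 0)) as [c [_ Hc]].
  - intros z Hz. apply H. revert Hz. unfold Rmin, Rmax. destruct Rle_dec; lra.
  - intros z Hz. apply (der_cont F (fun _ => 0)). apply H. revert Hz. unfold Rmin, Rmax. destruct Rle_dec; lra.
  - lra.
Qed.

Lemma final_bound x y M K : 0 <= M -> K <= 20000 -> x * x + y * y <= K * (M * M) -> Rabs x + Rabs y <= 200 * M.
Proof.
  intros HM HK H.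
  assert (Hx : Rabs x * Rabs x = x * x) by (rewrite <- Rabs_mult; apply Rabs_right; nra).
  assert (Hy : Rabs y * Rabs y = y * y) by (rewrite <- Rabs_mult; apply Rabs_right; nra).
  pose proof (Rabs_pos x). pose proof (Rabs_pos y).
  assert (0 <= (Rabs x - Rabs y) * (Rabs x - Rabs y)) by (pose proof (Rle_0_sqr (Rabs x - Rabs y)) as Q0; unfold Rsqr in Q0; exact Q0).
  assert (0 <= M * M) by nra.
  assert (S : (Rabs x + Rabs y) * (Rabs x + Rabs y) <= (200 * M) * (200 * M)) by nra.
  destruct (Rle_lt_dec (Rabs x + Rabs y) (200 * M)); auto. nra.
Qed.

Lemma abs_sub_le x y : Rabs (x - y) <= Rabs x + Rabs y.
Proof. unfold Rminus. rewrite <- (Rabs_Ropp y). apply Rabs_triang. Qed.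

Theorem lemma8p1 :
  exists T0 : R, 0 < T0 /\
  exists C : R, 0 < C /\
  forall (T : R) (Q Q' : R -> R),
    T0 <= T -> is_Q_T T Q Q' ->
    forall f : R -> R, continuous_on_Icc (-1) (T + 1) f ->
      exists h h' h'' : R -> R,
        green_sol T Q f h h' h'' /\
        (forall g g' g'' : R -> R, green_sol T Q f g g' g'' ->
           forall t, in_Icc (-1) (T + 1) t -> g t = h t) /\
        (forall M : R, (forall t, in_Icc (-1) (T + 1) t -> Rabs (f t) <= M) ->
           forall t, in_Icc (-1) (T + 1) t -> Rabs (h t) + Rabs (h' t) <= C * M).
Proof.
  exists 2. split; [lra|]. exists 200. split; [lra|].
  intros T Q Q' HT [HQd [HQ'd [HE [_ [HQ0 HQT]]]]] f Hf.
  set (E0 := pend_energy (Q 0) (Q' 0)) in *.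
  assert (Hen : forall t, Q' t * Q' t = 2*E0 + 2 - 2*cos (Q t)).
  { set (F := fun t => Q' t * Q' t / 2 + cos (Q t) - 1).
    assert (HF : forall t, is_derive F t 0). { intros t. unfold F. ad. field. }
    intros t. assert (E1 := deriv_const F HF t 0). unfold F in E1.
    unfold E0, pend_energy. simpl. lra. }
  assert (HQc : forall t, continuity_pt Q t) by (intros t; apply (der_cont Q Q'); auto).
  assert (HQ'c : forall t, continuity_pt Q' t) by (intros t; apply (der_cont Q' (fun t => sin (Q t))); auto).
  assert (Hne : forall t, Q' t <> 0).
  { intros t Z. specialize (Hen t). rewrite Z in Hen. pose proof (COS_bound (Q t)). lra. }
  assert (Hpos : forall t, 0 < Q' t).
  { destruct (mvt Q Q' 0 T ltac:(lra) HQd) as [c [Hc Ec]].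
    rewrite HQ0, HQT in Ec. assert (Hc' : 0 < Q' c).
    { destruct (Rlt_le_dec 0 (Q' c)); auto. pose proof PI_RGT_0. nra. }
    intros t. destruct (Rlt_le_dec 0 (Q' t)) as [|Hle]; auto. exfalso.
    assert (Hlt : Q' t < 0) by (destruct Hle; auto; exfalso; apply (Hne t); auto).
    destruct (Rtotal_order t c) as [H|[H|H]].
    - destruct (IVT Q' t c HQ'c H Hlt Hc') as [z [_ Hz]]. apply (Hne z); auto.
    - subst; lra.
    - destruct (IVT (fun x => - Q' x) c t ltac:(intros x; apply continuity_pt_opp; auto) H ltac:(lra) ltac:(lra)) as [z [_ Hz]].
      apply (Hne z); lra. }
  assert (HQr : forall t, 0 <= t <= T -> -PI <= Q t <= PI).
  { intros t Ht. split.
    - destruct (Rle_lt_or_eq_dec _ _ (proj1 Ht)) as [H|H]; [|subst; lra].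
      destruct (mvt Q Q' 0 t H HQd) as [c [_ Ec]]. specialize (Hpos c). nra.
    - destruct (Rle_lt_or_eq_dec _ _ (proj2 Ht)) as [H|H]; [|subst; lra].
      destruct (mvt Q Q' t T H HQd) as [c [_ Ec]]. specialize (Hpos c). nra. }
  assert (HE0 : 0 < E0) by exact HE.
  set (fe := fun s => f (clamp (-1) (T+1) s)).
  assert (Hfe : forall t, continuous fe t) by (apply cont_ext; auto; lra).
  assert (Hfe_eq : forall t, in_Icc (-1) (T+1) t -> fe t = f t) by (intros t Ht; unfold fe; rewrite clamp_id; auto).
  set (ip := fun s => / (Q' s * Q' s)).
  assert (Hipc : forall t, continuous ip t).
  { intros t. apply cont_of. unfold ip. apply continuity_pt_inv; [apply continuity_pt_mult; auto|].
    specialize (Hpos t). nra. }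
  set (A := fun t => RInt ip 0 t).
  assert (HA : forall t, is_derive A t (ip t)) by (apply ftc0; auto).
  set (u2 := fun t => Q' t * A t).
  set (u2' := fun t => sin (Q t) * A t + / Q' t).
  assert (Hu2 : forall t, is_derive u2 t (u2' t)).
  { intros t. unfold u2, u2'. ad1. unfold ip. field. auto. }
  assert (Hu2' : forall t, is_derive u2' t (cos (Q t) * u2 t)).
  { intros t. unfold u2, u2'. ad1. unfold ip. field. auto. }
  assert (Hu2c : forall t, continuity_pt u2 t) by (intros t; apply (der_cont u2 u2'); auto).
  set (J1 := fun t => RInt (fun s => Q' s * fe s) 0 t).
  set (J2 := fun t => RInt (fun s => u2 s * fe s) 0 t).
  assert (HJ1 : forall t, is_derive J1 t (Q' t * fe t)).
  { apply (ftc0 (fun s => Q' s * fe s)). intros x. apply cont_of. apply continuity_pt_mult; auto.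
    apply continuity_pt_filterlim. apply Hfe. }
  assert (HJ2 : forall t, is_derive J2 t (u2 t * fe t)).
  { apply (ftc0 (fun s => u2 s * fe s)). intros x. apply cont_of. apply continuity_pt_mult; auto.
    apply continuity_pt_filterlim. apply Hfe. }
  assert (HA0 : A 0 = 0) by (unfold A; rewrite RInt_point; reflexivity).
  assert (HJ10 : J1 0 = 0) by (unfold J1; rewrite RInt_point; reflexivity).
  assert (HJ20 : J2 0 = 0) by (unfold J2; rewrite RInt_point; reflexivity).
  assert (HAT : 0 < A T).
  { destruct (mvt A ip 0 T ltac:(lra) HA) as [c [_ Ec]]. unfold ip in Ec.
    assert (0 < / (Q' c * Q' c)) by (apply Rinv_0_lt_compat; specialize (Hpos c); nra). nra. }
  assert (Hu2T : 0 < u2 T) by (unfold u2; specialize (Hpos T); nra).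
  set (beta := (u2 T * J1 T - Q' T * J2 T) / u2 T).
  set (h := fun t => Q' t * J2 t - u2 t * J1 t + beta * u2 t).
  set (h1 := fun t => sin (Q t) * J2 t - u2' t * J1 t + beta * u2' t).
  set (h2 := fun t => cos (Q t) * h t - fe t).
  assert (Hh : forall t, is_derive h t (h1 t)).
  { intros t. unfold h, h1. ad1. ring. }
  assert (Hh1 : forall t, is_derive h1 t (h2 t)).
  { intros t. unfold h1, h2, h. ad1. unfold u2, u2'. field. auto. }
  assert (Hh0 : h 0 = 0) by (unfold h, u2; rewrite HA0, HJ10, HJ20; ring).
  assert (HhT : h T = 0) by (unfold h, beta; field; lra).
  assert (Hhc : forall t, continuity_pt h t) by (intros t; apply (der_cont h h1); auto).
  assert (Hh2c : forall t, continuous h2 t).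
  { intros t. apply cont_of. unfold h2. apply continuity_pt_minus.
    - apply continuity_pt_mult; auto. apply (continuity_pt_comp Q cos); auto. apply continuity_cos.
    - apply continuity_pt_filterlim. apply Hfe. }
  assert (Hgreen : green_sol T Q f h h1 h2).
  { split; [apply derive_on_of; auto|]. split; [apply derive_on_of; auto|].
    split; [apply cont_on_of; auto|]. split; [|split; auto].
    intros t Ht. unfold h2. rewrite Hfe_eq by auto. ring. }
  exists h, h1, h2. split; [exact Hgreen|]. split.
  { intros g g' g'' [Hg [Hg' [_ [Hgeq [Hg0 HgT]]]]].
    assert (Hint : forall t, -1 < t < T + 1 -> g t = h t).
    { set (K1 := fun t => (g t - h t) * sin (Q t) - (g' t - h1 t) * Q' t).
      set (K2 := fun t => (g t - h t) * u2' t - (g' t - h1 t) * u2 t).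
      assert (Hgd : forall t, -1 < t < T + 1 -> is_derive g t (g' t)) by (intros; eapply derive_interior; eauto).
      assert (Hg'd : forall t, -1 < t < T + 1 -> is_derive g' t (g'' t)) by (intros; eapply derive_interior; eauto).
      assert (Hg''e : forall t, -1 < t < T + 1 -> g'' t = cos (Q t) * g t - fe t).
      { intros t Ht. assert (Hi : in_Icc (-1) (T+1) t) by (unfold in_Icc; lra).
        specialize (Hgeq t Hi). rewrite Hfe_eq by auto. lra. }
      assert (HK1 : forall t, -1 < t < T + 1 -> is_derive K1 t 0).
      { intros t Ht. specialize (Hgd t Ht). specialize (Hg'd t Ht). unfold K1. ad1.
        rewrite (Hg''e t Ht). unfold h2. ring. }
      assert (HK2 : forall t, -1 < t < T + 1 -> is_derive K2 t 0).
      { intros t Ht. specialize (Hgd t Ht). specialize (Hg'd t Ht). unfold K2. ad1.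
        rewrite (Hg''e t Ht). unfold h2. ring. }
      assert (Hid : forall t, g t - h t = K2 t * Q' t - K1 t * u2 t).
      { intros t. unfold K1, K2, u2, u2'. field. auto. }
      assert (K20 : K2 0 = 0) by (unfold K2, u2; rewrite Hg0, Hh0, HA0; ring).
      assert (K2z : forall t, -1 < t < T + 1 -> K2 t = 0).
      { intros t Ht. rewrite <- K20. apply (const_open (-1) (T+1)); auto; lra. }
      assert (K1T : K1 T = 0).
      { assert (X := Hid T). rewrite HgT, HhT, (K2z T ltac:(lra)) in X. nra. }
      assert (K1z : forall t, -1 < t < T + 1 -> K1 t = 0).
      { intros t Ht. rewrite <- K1T. apply (const_open (-1) (T+1)); auto; lra. }
      intros t Ht. assert (X := Hid t). rewrite (K1z t Ht), (K2z t Ht) in X. lra. }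
    intros t Ht.
    destruct (Rtotal_order t (-1)) as [Hl|[He|Hg1]]; [unfold in_Icc in Ht; lra| |].
    - subst t. apply (endpoint_eq (fun s => in_Icc (-1) (T+1) s /\ s <> -1) (-1) g h (g' (-1)) (h1 (-1))).
      + apply Hg. auto.
      + apply (derive_on_of (-1) (T+1) h h1 Hh). auto.
      + intros d Hd. exists (-1 + Rmin d 1 / 2).
        assert (m1 := Rmin_l d 1). assert (m2 := Rmin_r d 1). assert (0 < Rmin d 1) by (apply Rmin_pos; lra).
        split; [split; [unfold in_Icc; lra|lra]|]. split; [lra|]. split.
        * rewrite Rabs_right; lra.
        * apply Hint. lra.
    - destruct (Rtotal_order t (T+1)) as [Hl2|[He2|Hg2]]; [apply Hint; lra| |unfold in_Icc in Ht; lra].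
      subst t. apply (endpoint_eq (fun s => in_Icc (-1) (T+1) s /\ s <> T+1) (T+1) g h (g' (T+1)) (h1 (T+1))).
      + apply Hg. auto.
      + apply (derive_on_of (-1) (T+1) h h1 Hh). auto.
      + intros d Hd. exists (T + 1 - Rmin d 1 / 2).
        assert (m1 := Rmin_l d 1). assert (m2 := Rmin_r d 1). assert (0 < Rmin d 1) by (apply Rmin_pos; lra).
        split; [split; [unfold in_Icc; lra|lra]|]. split; [lra|]. split.
        * rewrite Rabs_left; lra.
        * apply Hint. lra. }
  intros M HM.
  assert (HM0 : 0 <= M) by (eapply Rle_trans; [apply Rabs_pos| apply (HM 0); unfold in_Icc; lra]).
  assert (Hfeb : forall t, in_Icc (-1) (T+1) t -> Rabs (fe t) <= M) by (intros; rewrite Hfe_eq; auto).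
  assert (Hh2b : forall t, in_Icc (-1) (T+1) t -> Rabs (h2 t) <= Rabs (h t) + M).
  { intros t Ht. unfold h2. unfold Rminus. eapply Rle_trans; [apply Rabs_triang|].
    rewrite Rabs_Ropp, Rabs_mult. pose proof (Hfeb t Ht). pose proof (Rabs_pos (h t)).
    assert (Rabs (cos (Q t)) <= 1) by (apply Rabs_le; apply COS_bound). nra. }
  destruct (w_der Q Q' HQd HQ'd) as [Hw Hw1].
  assert (Hhb : forall t, 0 <= t <= T -> Rabs (h t) <= 8 * M).
  { assert (Mp : forall s : R, (s = 1 \/ s = -1) -> forall t, 0 <= t <= T -> s * h t - 4 * M * wf Q t <= 0).
    { intros s Hs. apply (max_principle T E0 Q Q' (fun t => s * h t - 4 * M * wf Q t)
        (fun t => s * h1 t - 4 * M * w1f Q Q' t) (fun t => s * h2 t - 4 * M * w2f Q Q' t)); auto; try lra.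
      - intros t. ad1. ring.
      - intros t. ad1. ring.
      - rewrite Hh0. destruct (w_props Q Q' E0 0 ltac:(apply HQr; lra) (Hen 0) HE0) as [[? ?] ?]. nra.
      - rewrite HhT. destruct (w_props Q Q' E0 T ltac:(apply HQr; lra) (Hen T) HE0) as [[? ?] ?]. nra.
      - intros t Ht. destruct (w_props Q Q' E0 t (HQr t Ht) (Hen t) HE0) as [[? ?] ?].
        assert (Hi : in_Icc (-1) (T+1) t) by (unfold in_Icc; lra).
        assert (E1 : - (s * h2 t - 4 * M * w2f Q Q' t) + cos (Q t) * (s * h t - 4 * M * wf Q t)
          = s * fe t - 4 * M * (- w2f Q Q' t + cos (Q t) * wf Q t)) by (unfold h2; ring).
        rewrite E1. specialize (Hfeb t Hi). apply Rabs_le_between in Hfeb.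
        destruct Hs; subst s; nra. }
    intros t Ht. destruct (w_props Q Q' E0 t (HQr t Ht) (Hen t) HE0) as [[? ?] ?].
    pose proof (Mp 1 (or_introl eq_refl) t Ht). pose proof (Mp (-1) (or_intror eq_refl) t Ht).
    apply Rabs_le. nra. }
  assert (Hh2b' : forall t, 0 <= t <= T -> Rabs (h2 t) <= 9 * M).
  { intros t Ht. pose proof (Hh2b t ltac:(unfold in_Icc; lra)). pose proof (Hhb t Ht). lra. }
  assert (Hh1b : forall t, 0 <= t <= T -> Rabs (h1 t) <= 25 * M).
  { intros t Ht. destruct (Rle_lt_dec (t + 1) T) as [Hc|Hc].
    - destruct (mvt h h1 t (t+1) ltac:(lra) Hh) as [c [Hc1 Ec]].
      assert (B1 := mvt_bound h1 h2 t c (9 * M) ltac:(lra) Hh1 ltac:(intros; apply Hh2b'; lra)).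
      pose proof (Hhb t Ht). pose proof (Hhb (t+1) ltac:(lra)).
      replace (t + 1 - t) with 1 in Ec by ring. rewrite Rmult_1_r in Ec.
      assert (Rabs (h (t+1) - h t) <= Rabs (h (t+1)) + Rabs (h t)).
      { apply abs_sub_le. }
      assert (Rabs (h1 t) <= Rabs (h (t + 1) - h t) + Rabs (h1 c - h1 t)).
      { replace (h1 t) with ((h (t+1) - h t) - (h1 c - h1 t)) at 1 by lra.
        unfold Rminus at 1. rewrite <- (Rabs_Ropp (h1 c - h1 t)). apply Rabs_triang. }
      assert (9 * M * (c - t) <= 9 * M) by nra. rewrite Ec in *. lra.
    - destruct (mvt h h1 (t-1) t ltac:(lra) Hh) as [c [Hc1 Ec]].
      assert (B1 := mvt_bound h1 h2 c t (9 * M) ltac:(lra) Hh1 ltac:(intros; apply Hh2b'; lra)).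
      pose proof (Hhb t Ht). pose proof (Hhb (t-1) ltac:(lra)).
      replace (t - (t - 1)) with 1 in Ec by ring. rewrite Rmult_1_r in Ec.
      assert (Rabs (h t - h (t - 1)) <= Rabs (h t) + Rabs (h (t-1))).
      { apply abs_sub_le. }
      assert (Rabs (h1 t) <= Rabs (h t - h (t - 1)) + Rabs (h1 t - h1 c)).
      { replace (h1 t) with ((h t - h (t - 1)) + (h1 t - h1 c)) at 1 by lra. apply Rabs_triang. }
      assert (9 * M * (t - c) <= 9 * M) by nra. rewrite Ec in *. lra. }
  intros t Ht. unfold in_Icc in Ht.
  destruct (Rle_lt_dec 0 t) as [H0|H0]; [destruct (Rle_lt_dec t T) as [H1|H1]|].
  - pose proof (Hhb t (conj H0 H1)). pose proof (Hh1b t (conj H0 H1)). lra.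
  - assert (G := gron_fwd h h1 h2 T (625 * (M * M)) M HM0 Hh Hh1
      ltac:(intros; apply Hh2b; unfold in_Icc; lra)
      ltac:(rewrite HhT; pose proof (Hh1b T ltac:(lra)); apply Rabs_le_between in H; nra) t ltac:(lra)).
    apply (final_bound _ _ M (27 * 626)); auto; lra.
  - assert (G := gron_bwd h h1 h2 0 (625 * (M * M)) M HM0 Hh Hh1
      ltac:(intros; apply Hh2b; unfold in_Icc; lra)
      ltac:(rewrite Hh0; pose proof (Hh1b 0 ltac:(lra)); apply Rabs_le_between in H; nra) t ltac:(lra)).
    apply (final_bound _ _ M (27 * 626)); auto; lra.
Qed.
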